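(* Let $G$ be a twin-free graph and let $t\ge 1$. (i) If $G=K_1$, then $\det(G)=0$ and $\det(\mu_t(G))=t$. (ii) If $G=H+K_1$ (disjoint union with one isolated vertex) for some graph $H$ with at least one edge, then $\det(\mu_t(G))=\det(G)+t-1$.
   Context: All graphs are finite and simple. For a graph $G$ with $V(G)=\{v_1,\dots,v_n\}$ and an integer $t\ge1$, the generalized Mycielskian $\mu_t(G)$ has vertex set $\{u_i^s: 1\le i\le n,\ 0\le s\le t\}\cup\{w\}$, where $u_i^0$ is identified with $v_i$. Its edges are: $u_i^0u_j^0$ for each edge $v_iv_j$ of $G$; $u_i^su_j^{s+1}$ and $u_j^su_i^{s+1}$ for each edge $v_iv_j$ of $G$ and each $0\le s<t$; and $u_i^tw$ for all $1\le i\le n$. A set $S\subseteq V(G)$ is a determining set for $G$ if the only automorphism of $G$ fixing every vertex of $S$ is the identity; $\det(G)$ is the minimum size of a determining set. Two vertices are twins if they have the same open neighborhood; $G$ is twin-free if it has no pair of distinct twin vertices. *)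

(* Defs.v *)
From mathcomp Require Import all_boot all_fingroup.
Set Implicit Arguments. Unset Strict Implicit. Unset Printing Implicit Defensive.

Definition simple_graph (T : finType) (e : rel T) : Prop :=
  symmetric e /\ irreflexive e.

Definition nbhd (T : finType) (e : rel T) (x : T) : {set T} := [set z | e x z].

Definition twin_free (T : finType) (e : rel T) : Prop :=
  forall x y : T, nbhd e x = nbhd e y -> x = y.

Definition is_aut (T : finType) (e : rel T) (s : {perm T}) : bool :=
  [forall x, [forall y, e (s x) (s y) == e x y]].

Definition determining (T : finType) (e : rel T) (S : {set T}) : bool :=
  [forall s : {perm T}, (is_aut e s && [forall x in S, s x == x]) ==> (s == 1%g)].

(* determining number: the minimum size of a determining set
   (setT is always determining, so the arg min is well defined) *)
Definition det_num (T : finType) (e : rel T) : nat :=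
  #| [arg min_(S < [set: T] | determining e S) #|S| ] |.

(* Generalized Mycielskian mu_t(G): vertex Some (v_i, s) is u_i^s (0 <= s <= t),
   vertex None is w. *)
Definition myc_vertex (T : finType) (t : nat) := option (T * 'I_t.+1)%type.

Definition myc_rel (T : finType) (e : rel T) (t : nat) : rel (myc_vertex T t) :=
  fun a b =>
    match a, b with
    | Some (x, i), Some (y, j) =>
        e x y && [|| (nat_of_ord i == 0) && (nat_of_ord j == 0),
                     (nat_of_ord i).+1 == j | (nat_of_ord j).+1 == i]
    | Some (_, i), None => nat_of_ord i == t
    | None, Some (_, j) => nat_of_ord j == t
    | None, None => false
    end.

Definition addK1 (T : finType) (h : rel T) : rel (option T) :=
  fun a b =>
    match a, b with
    | Some x, Some y => h x y
    | _, _ => false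
    end.

Arguments myc_rel {T} e t.

(* Main.v *)
Require Import Defs.
From mathcomp Require Import all_boot all_fingroup zify.
Set Implicit Arguments. Unset Strict Implicit. Unset Printing Implicit Defensive.

Lemma isautE (T : finType) (e : rel T) (s : {perm T}) :
  is_aut e s -> forall x y, e (s x) (s y) = e x y.
Proof. by move=> /forallP H x y; move/forallP: (H x) => /(_ y)/eqP. Qed.

Lemma isautP (T : finType) (e : rel T) (s : {perm T}) :
  (forall x y, e (s x) (s y) = e x y) -> is_aut e s.
Proof. by move=> H; apply/forallP=> x; apply/forallP=> y; rewrite H. Qed.

Lemma isautV (T : finType) (e : rel T) (s : {perm T}) : is_aut e s -> is_aut e s^-1.
Proof. by move=> /isautE H; apply: isautP => x y; rewrite -H !permKV. Qed.

Lemma detP (T : finType) (e : rel T) (S : {set T}) :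
  reflect (forall s : {perm T}, is_aut e s -> (forall x, x \in S -> s x = x) -> s = 1%g)
    (determining e S).
Proof.
apply: (iffP forallP) => H s.
- move=> As Fs; apply/eqP; move/implyP: (H s); apply; rewrite As /=.
  by apply/forall_inP => x xS; rewrite Fs.
- apply/implyP => /andP [As /forall_inP Fs]; apply/eqP; apply: H => // x xS.
  by apply/eqP; apply: Fs.
Qed.

Lemma determT (T : finType) (e : rel T) : determining e [set: T].
Proof. by apply/detP => s _ H; apply/permP => x; rewrite perm1; apply: H; rewrite in_setT. Qed.

Lemma det_le (T : finType) (e : rel T) S : determining e S -> det_num e <= #|S|.
Proof. rewrite /det_num; case: arg_minnP; first exact: determT. by move=> A _ H dS; apply: H. Qed.

Lemma det_ex (T : finType) (e : rel T) : exists2 S, determining e S & #|S| = det_num e.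
Proof. rewrite /det_num; case: arg_minnP; first exact: determT. by move=> A dA _; exists A. Qed.

Lemma tperm_aut (T : finType) (e : rel T) a b : symmetric e -> irreflexive e ->
  (forall v, v != a -> v != b -> e a v = e b v) -> is_aut e (tperm a b).
Proof.
move=> sy ir H; apply: isautP => x y.
have H' : forall v, v <> a -> v <> b -> e a v = e b v.
  by move=> v /eqP va /eqP vb; apply: H.
case: tpermP => [->|->|xa xb]; case: tpermP => [->|->|ya yb];
  rewrite ?irr ?ir //; try by rewrite sy.
- by rewrite H'.
- by rewrite H'.
- by rewrite sy -H' // sy.
- by rewrite sy H' // sy.
Qed.

Lemma iso_bound (T : finType) (e : rel T) (A S : {set T}) : symmetric e -> irreflexive e ->
  (forall a v, a \in A -> e a v = false) -> determining e S -> #|A| <= #|A :&: S| + 1.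
Proof.
move=> sy ir iso /detP dS; rewrite -(cardsID S A) leq_add2l.
apply/card_le1_eqP => a b /setDP [aA aS] /setDP [bA bS].
apply/eqP; apply: contraT => ab.
have E : tperm a b = 1%g.
  apply: dS.
  - by apply: tperm_aut => // v _ _; rewrite !iso.
  - move=> x xS; apply: tpermD; apply/eqP => xa.
      by rewrite xa xS in aS.
    by rewrite xa xS in bS.
have := congr1 (fun s : {perm T} => s a) E; rewrite tpermL perm1 => ba.
by rewrite ba eqxx in ab.
Qed.

Lemma myc_sym (T : finType) (e : rel T) t : symmetric e -> symmetric (myc_rel e t).
Proof.
move=> sy [[x i]|] [[y j]|] //=; rewrite sy; congr (_ && _).
by rewrite andbC; case: (_ && _) => //=; rewrite orbC.
Qed.

Lemma myc_irr (T : finType) (e : rel T) t : irreflexive e -> irreflexive (myc_rel e t).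
Proof. by move=> ir [[x i]|] //=; rewrite ir. Qed.


Lemma leq_cardsU (T : finType) (A B : {set T}) : #|A :|: B| <= #|A| + #|B|.
Proof. by rewrite -cardsUI leq_addr. Qed.

Lemma partI t (ht : 1 <= t) (T : finType) (e : rel T) :
  simple_graph e -> twin_free e -> #|T| = 1 ->
  det_num e = 0 /\ det_num (myc_rel e t) = t.
Proof.
move=> [sy ir] _ cT.
have /card_gt0P [x0 _] : 0 < #|T| by rewrite cT.
have allx : forall x : T, x = x0.
  move=> x; have /card_le1_eqP H : #|T| <= 1 by rewrite cT.
  by apply: H.
have perm_triv : forall s : {perm T}, s = 1%g.
  by move=> s; apply/permP => x; rewrite perm1 (allx (s x)) (allx x).
split.
  apply/eqP; rewrite -leqn0 -(cards0 T); apply: det_le; apply/detP => s _ _.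
  exact: perm_triv.
set mu := myc_rel e t.
have exx : forall y, e x0 y = false by move=> y; rewrite (allx y) ir.
apply/eqP; rewrite eqn_leq; apply/andP; split.
- set S1 := [set Some (x0, inord i) | i : 'I_t.-1] : {set myc_vertex T t}.
  set S := S1 :|: [set None].
  apply: (@leq_trans #|S|); last first.
    have := leq_cardsU S1 [set None]; rewrite cards1.
    have : #|S1| <= t.-1.
      by apply: leq_trans (leq_imset_card _ _) _; rewrite card_ord.
    rewrite /S; lia.
  apply: det_le; apply/detP => s As Fs.
  have sE := isautE As.
  have sN : s None = None by apply: Fs; rewrite !inE eqxx orbT.
  have sLow : forall i : 'I_t.+1, i < t.-1 -> s (Some (x0, i)) = Some (x0, i).
    move=> i it; apply: Fs; rewrite inE; apply/orP; left; apply/imsetP.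
    by exists (Ordinal it) => //=; rewrite inord_val.
  have sTop : s (Some (x0, ord_max)) = Some (x0, ord_max).
    move: (sE (Some (x0, ord_max)) None); rewrite sN /= eqxx.
    case: (s _) => [[y j]|] //= /eqP jt; rewrite (allx y); congr (Some (_, _)).
    exact: val_inj.
  apply/permP => [[[x i]|]]; rewrite perm1 ?sN //; rewrite (allx x).
  have [it1|ti] := ltnP i t.-1; first exact: sLow.
  have [iT|iT] := eqVneq i ord_max; first by rewrite iT.
  have ie : (i : nat) = t.-1.
    have : i != t :> nat by apply: contraNneq iT => h; apply/eqP/val_inj.
    have := ltn_ord i; lia.
  case E : (s (Some (x0,i))) => [[y j]|].
  + rewrite (allx y); congr (Some (_, _)); apply: val_inj => /=.
    have [jt1|tj] := ltnP j t.-1.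
      have : s (Some (x0, j)) = s (Some (x0,i)) by rewrite sLow // E (allx y).
      move/perm_inj => [] /(congr1 val) /=; lia.
    have [jT|jT] := eqVneq j ord_max.
      have : s (Some(x0,ord_max)) = s (Some(x0,i)) by rewrite sTop E (allx y) jT.
      by move/perm_inj => [] h; rewrite h eqxx in iT.
    have : j != t :> nat by apply: contraNneq jT => h; apply/eqP/val_inj.
    have := ltn_ord j; lia.
  + have : s None = s (Some (x0,i)) by rewrite E sN.
    by move/perm_inj.
- have [S dS <-] := det_ex mu.
  set A := [set Some (x0, widen_ord (leqnSn t) i) | i : 'I_t] : {set myc_vertex T t}.
  have cA : #|A| = t.
    rewrite card_imset ?card_ord //.
    by move=> i j [] E; apply: val_inj; exact: E.
  have isoA : forall a v, a \in A -> mu a v = false.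
    move=> a [[y j]|] /imsetP [i _ ->] /=; first by rewrite exx.
    by apply/negbTE; rewrite neq_ltn ltn_ord.
  have := iso_bound (@myc_sym _ _ t sy) (@myc_irr _ _ t ir) isoA dS.
  have [b bS bA] : exists2 b, b \in S & b \notin A.
    have [NS|NS] := boolP (None \in S).
      by exists None => //; apply/imsetP => [[i _]].
    set zt : myc_vertex T t := Some (x0, ord_max).
    have [zS|zS] := boolP (zt \in S).
      exists zt => //; apply/imsetP => [[i _ [] /= E]].
      have := ltn_ord i; lia.
    have E : tperm zt None = 1%g.
      move/detP: dS; apply.
      + apply: tperm_aut; [exact: myc_sym|exact: myc_irr|].
        move=> [[y j]|] vz //= _; rewrite exx; apply/esym/negbTE.
        apply: contra vz => /eqP jt; apply/eqP; rewrite (allx y); congr (Some (_, _)).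
        exact: val_inj.
      + move=> x xS; apply: tpermD; apply/eqP => h.
          by rewrite h xS in zS.
        by rewrite h xS in NS.
    by have := congr1 (fun s : {perm _} => s zt) E; rewrite tpermL perm1.
  have : 0 < #|S :\: A| by apply/card_gt0P; exists b; rewrite inE bA bS.
  have := cardsID A S; rewrite setIC cA => h1 h2 h3; rewrite -h1; apply: leq_trans h3 _; by rewrite leq_add2l.
Qed.

Lemma addK1_sym (T : finType) (h : rel T) : symmetric h -> symmetric (addK1 h).
Proof. by move=> sy [x|] [y|] //=; rewrite sy. Qed.

Lemma addK1_irr (T : finType) (h : rel T) : irreflexive h -> irreflexive (addK1 h).
Proof. by move=> ir [x|] //=. Qed.

Lemma nbr_ex (T : finType) (h : rel T) : twin_free (addK1 h) -> forall x, exists y, h x y.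
Proof.
move=> tw x; case: (boolP [exists y, h x y]) => [/existsP//|/existsPn H].
have : nbhd (addK1 h) (Some x) = nbhd (addK1 h) None.
  by apply/setP => [[y|]]; rewrite !inE //=; apply/negbTE/H.
by move/tw.
Qed.

Lemma autG_None (T : finType) (h : rel T) (s : {perm option T}) :
  twin_free (addK1 h) -> is_aut (addK1 h) s -> s None = None.
Proof.
move=> tw As; case E: (s None) => [x|] //.
have [y hxy] := nbr_ex tw x.
by have := isautE As None ((s^-1)%g (Some y)); rewrite permKV E /= hxy.
Qed.

Lemma mu_zt (T : finType) (h : rel T) t v :
  myc_rel (addK1 h) t (Some (None, ord_max)) v -> v = None.
Proof. by case: v => [[a j]|]. Qed.

Lemma mu_iso (T : finType) (h : rel T) t (i : 'I_t.+1) v :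
  i < t -> myc_rel (addK1 h) t (Some (None, i)) v = false.
Proof. by move=> it; case: v => [[a j]|] //=; apply/negbTE; rewrite neq_ltn it. Qed.

Lemma mu_down (T : finType) (h : rel T) t x y (i : 'I_t.+1) : h x y ->
  myc_rel (addK1 h) t (Some (Some x, i)) (Some (Some y, inord i.-1)).
Proof.
move=> hxy /=; rewrite hxy /= inordK; last by have := ltn_ord i; lia.
by case: (nat_of_ord i) => [|n] //=; rewrite eqxx !orbT.
Qed.

Lemma mu_up (T : finType) (h : rel T) t x y (i : 'I_t.+1) : h x y -> i < t ->
  myc_rel (addK1 h) t (Some (Some x, i)) (Some (Some y, inord i.+1)).
Proof. by move=> hxy it /=; rewrite hxy /= inordK // eqxx /= orbT. Qed.

Lemma two_nbrs (T : finType) (h : rel T) t (ht : 1 <= t) (x1 y1 : T) :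
  h x1 y1 -> (forall x, exists y, h x y) ->
  forall v, v != Some (None, ord_max) -> (exists n, myc_rel (addK1 h) t v n) ->
  exists n1 n2, [/\ n1 != n2, myc_rel (addK1 h) t v n1 & myc_rel (addK1 h) t v n2].
Proof.
move=> hx1 F1 [[[x|] i]|] vz [n vn].
- have [y hxy] := F1 x.
  exists (Some (Some y, inord i.-1)).
  have iL := ltn_ord i.
  have [it|ti] := ltnP i t.
  + exists (Some (Some y, inord i.+1)); split; [|exact: mu_down|exact: mu_up].
    apply/eqP => -[] /(f_equal (@nat_of_ord _)); rewrite !inordK; lia.
  + exists None; split => //; first exact: mu_down.
    by apply/eqP; lia.
- have it : i < t.
    have : (i : nat) != t.
      apply: contraNneq vz => E; apply/eqP; congr (Some (_, _)); exact: val_inj.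
    have := ltn_ord i; lia.
  by rewrite mu_iso in vn.
- exists (Some (None, ord_max)), (Some (Some x1, ord_max)).
  by split => //=; rewrite eqxx.
Qed.

Lemma fix_zt (T : finType) (h : rel T) t (ht : 1 <= t) (x1 y1 : T) :
  h x1 y1 -> (forall x, exists y, h x y) ->
  forall s : {perm myc_vertex (option T) t}, is_aut (myc_rel (addK1 h) t) s ->
  s (Some (None, ord_max)) = Some (None, ord_max).
Proof.
move=> hx1 F1 s As; apply/eqP; apply: contraT => sz.
have ex : exists n, myc_rel (addK1 h) t (s (Some (None, ord_max))) n.
  by exists (s None); rewrite isautE //= eqxx.
have [n1 [n2 [n12 m1 m2]]] := two_nbrs ht hx1 F1 sz ex.
have e1 : (s^-1)%g n1 = None.
  by apply: (@mu_zt _ h t); rewrite -(isautE As) permKV.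
have e2 : (s^-1)%g n2 = None.
  by apply: (@mu_zt _ h t); rewrite -(isautE As) permKV.
by move: n12; rewrite -(permKV s n1) -(permKV s n2) e1 e2 eqxx.
Qed.

Lemma fix_None (T : finType) (h : rel T) t (ht : 1 <= t) (x1 y1 : T) :
  h x1 y1 -> (forall x, exists y, h x y) ->
  forall s : {perm myc_vertex (option T) t}, is_aut (myc_rel (addK1 h) t) s ->
  s None = None.
Proof.
move=> hx1 F1 s As; apply: (@mu_zt _ h t).
by rewrite -(fix_zt ht hx1 F1 As) isautE //= eqxx.
Qed.

Lemma fix_iso (T : finType) (h : rel T) t (ht : 1 <= t) (x1 y1 : T) :
  h x1 y1 -> (forall x, exists y, h x y) ->
  forall s : {perm myc_vertex (option T) t}, is_aut (myc_rel (addK1 h) t) s ->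
  (forall i : 'I_t.+1, i < t.-1 -> s (Some (None, i)) = Some (None, i)) ->
  forall i, s (Some (None, i)) = Some (None, i).
Proof.
move=> hx1 F1 s As Hl i.
have sz := fix_zt ht hx1 F1 As.
have sN := fix_None ht hx1 F1 As.
have [iT|iT] := eqVneq i ord_max; first by rewrite iT.
have [il|li] := ltnP i t.-1; first exact: Hl.
have it : (i : nat) != t.
  by apply: contraNneq iT => E; apply/eqP; exact: val_inj.
have iL := ltn_ord i.
case E : (s (Some (None, i))) => [[[x|] j]|].
- have [y hxy] := F1 x.
  move: (mu_down j hxy); rewrite -E -[X in myc_rel _ _ _ X](permKV s) isautE //.
  by rewrite mu_iso //; lia.
- congr (Some (_, _)); apply: val_inj => /=.
  have jL := ltn_ord j.
  have [jl|lj] := ltnP j t.-1.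
    have : s (Some (None, j)) = s (Some (None, i)) by rewrite Hl // E.
    move/perm_inj => -[] E'; rewrite E' in jl; lia.
  have [jT|jT] := eqVneq j ord_max.
    have : s (Some (None, ord_max)) = s (Some (None, i)) by rewrite sz E jT.
    move/perm_inj => [] E'; move: it; rewrite -E' /= eqxx //.
  have : (j : nat) != t.
    by apply: contraNneq jT => E'; apply/eqP; exact: val_inj.
  lia.
- have : s None = s (Some (None, i)) by rewrite E sN.
  by move/perm_inj.
Qed.

Lemma lvl_aux (T : finType) (h : rel T) t (F1 : forall x, exists y, h x y) :
  forall k k', k' <= k -> forall s : {perm myc_vertex (option T) t},
  is_aut (myc_rel (addK1 h) t) s -> s None = None ->
  (forall i, s (Some (None, i)) = Some (None, i)) ->
  forall x (i : 'I_t.+1), i + k' = t -> exists b, s (Some (Some x, i)) = Some (b, i).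
Proof.
elim=> [|k IH] k' lek s As sN sI x i ik.
- have iE : (i : nat) = t by lia.
  move: (isautE As (Some (Some x, i)) None); rewrite sN /= iE eqxx.
  case: (s _) => [[b j]|] //= /eqP jt.
  by exists b; congr (Some (_, _)); apply: val_inj; rewrite /= jt iE.
- have [le|kk] := leqP k' k; first exact: (IH k').
  have it : i < t by lia.
  have [y hxy] := F1 x.
  have [b' Eb'] := IH k (leqnn k) s As sN sI y (inord i.+1) (ltac:(rewrite inordK; lia)).
  move: (mu_up hxy it); rewrite -(isautE As) Eb'.
  case E : (s (Some (Some x, i))) => [[c j]|]; last first.
    have : s None = s (Some (Some x, i)) by rewrite E sN.
    by move/perm_inj.
  rewrite /= inordK; last by lia.
  move=> /andP [_ /or3P [/andP [_ //]| /eqP [ji] | /eqP ji]].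
  + by exists c; congr (Some (_, _)); apply: val_inj.
  + exfalso; have jL := ltn_ord j.
    case: c E => [x''|] E.
    * have sN' : (s^-1)%g None = None by rewrite -{1}sN permK.
      have sI' : forall i0, (s^-1)%g (Some (None, i0)) = Some (None, i0).
        by move=> i0; rewrite -{1}(sI i0) permK.
      have [b2 E2] := IH k.-1 (leq_pred k) (s^-1)%g (isautV As) sN' sI' x'' j
        (ltac:(lia)).
      by move: E2; rewrite -E permK => -[] _ /(f_equal (@nat_of_ord _)); lia.
    * have : s (Some (None, j)) = s (Some (Some x, i)) by rewrite sI E.
      by move/perm_inj.
Qed.

Lemma lvl (T : finType) (h : rel T) t (F1 : forall x, exists y, h x y)
  (s : {perm myc_vertex (option T) t}) :
  is_aut (myc_rel (addK1 h) t) s -> s None = None ->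
  (forall i, s (Some (None, i)) = Some (None, i)) ->
  forall a (i : 'I_t.+1), exists b, s (Some (a, i)) = Some (b, i).
Proof.
move=> As sN sI [x|] i; last by exists None; rewrite sI.
apply: (lvl_aux F1 (leqnn (t - i))) => //; have := ltn_ord i; lia.
Qed.

Lemma upperII (T : finType) (h : rel T) t (ht : 1 <= t) (x1 y1 : T) :
  symmetric h -> h x1 y1 -> twin_free (addK1 h) ->
  forall D : {set option T}, determining (addK1 h) D ->
  det_num (myc_rel (addK1 h) t) <= #|D| + t.-1.
Proof.
move=> hsym hx1 tw D dD.
have F1 := nbr_ex tw.
set S0 := [set Some (a, ord0) | a in D] : {set myc_vertex (option T) t}.
set S1 := [set Some (None, inord i) | i : 'I_t.-1] : {set myc_vertex (option T) t}.
apply: (@leq_trans #|S0 :|: S1|).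
2: { have h3 := leq_cardsU S0 S1.
     have h1 : #|S0| <= #|D| by apply: leq_imset_card.
     have h2 : #|S1| <= t.-1.
       by apply: leq_trans (leq_imset_card _ _) _; rewrite card_ord.
     by apply: leq_trans h3 _; apply: leq_add. }
apply: det_le; apply/detP => s As Fs.
have sE := isautE As.
have sN := fix_None ht hx1 F1 As.
have sI : forall i, s (Some (None, i)) = Some (None, i).
  apply: (fix_iso ht hx1 F1 As) => i il; apply: Fs.
  rewrite inE; apply/orP; right; apply/imsetP.
  by exists (Ordinal il) => //=; rewrite inord_val.
pose f := fun a => match s (Some (a, ord0)) with Some (b, _) => b | None => a end.
have fE : forall a, s (Some (a, ord0)) = Some (f a, ord0).
  by move=> a; have [b Eb] := lvl F1 As sN sI a ord0; rewrite /f Eb.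
have finj : injective f.
  move=> a b fab; have : s (Some (a, ord0)) = s (Some (b, ord0)) by rewrite !fE fab.
  by move/perm_inj => -[].
have pi1 : perm finj = 1%g.
  move/detP: dD; apply.
  - apply: isautP => a b; rewrite !permE.
    by have := sE (Some (a, ord0)) (Some (b, ord0)); rewrite !fE /= !andbT.
  - move=> a aD; rewrite permE.
    have : s (Some (a, ord0)) = Some (a, ord0).
      by apply: Fs; rewrite inE; apply/orP; left; apply/imsetP; exists a.
    by rewrite fE => -[].
have s0 : forall a, s (Some (a, ord0)) = Some (a, ord0).
  move=> a; rewrite fE.
  by have := congr1 (fun p : {perm _} => p a) pi1; rewrite permE perm1 => ->.
have step : forall n (i : 'I_t.+1), i = n :> nat -> forall a, s (Some (a, i)) = Some (a, i).
  elim=> [|n IH] i iE a.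
  - by have -> : i = ord0 by apply: val_inj.
  - have nt : n < t.+1 by have := ltn_ord i; lia.
    have IH' := IH (inord n) (inordK nt).
    have [b Eb] := lvl F1 As sN sI a i.
    rewrite Eb; congr (Some (_, _)).
    apply: tw; apply/setP => c; rewrite !inE.
    rewrite (addK1_sym hsym b c) (addK1_sym hsym a c).
    have := sE (Some (c, inord n)) (Some (a, i)).
    by rewrite IH' Eb /= inordK // iE eqxx /= orbT !andbT.
apply/permP => [[[a i]|]]; rewrite perm1 ?sN //.
exact: (step i).
Qed.

Lemma lowerII (T : finType) (h : rel T) t :
  symmetric h -> irreflexive h -> twin_free (addK1 h) ->
  det_num (addK1 h) + t.-1 <= det_num (myc_rel (addK1 h) t).
Proof.
move=> hsym hirr tw.
have [S dS <-] := det_ex (myc_rel (addK1 h) t).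
set A := [set Some (None, widen_ord (leqnSn t) i) | i : 'I_t] : {set myc_vertex (option T) t}.
have cA : #|A| = t.
  rewrite card_imset ?card_ord //.
  by move=> i j [] E; apply: val_inj; exact: E.
have isoA : forall a v, a \in A -> myc_rel (addK1 h) t a v = false.
  by move=> a v /imsetP [i _ ->]; apply: mu_iso => /=; exact: ltn_ord.
have hb := iso_bound (@myc_sym _ _ t (addK1_sym hsym)) (@myc_irr _ _ t (addK1_irr hirr)) isoA dS.
set Q := [set a : option T | (a != None) && [exists i, Some (a, i) \in S]].
have dQ : determining (addK1 h) Q.
  apply/detP => s As Fs.
  have sN := autG_None tw As.
  pose g := fun v : myc_vertex (option T) t =>
    if v is Some (a, i) then Some (s a, i) else None.
  have ginj : injective g.
    by move=> [[a i]|] [[b j]|] //= [/perm_inj -> ->].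
  have g1 : perm ginj = 1%g.
    move/detP: dS; apply.
    - by apply: isautP => [[[a i]|] [[b j]|]]; rewrite !permE //= isautE.
    - move=> [[a i]|] vS; rewrite permE //=.
      case: a vS => [x|] vS; last by rewrite sN.
      rewrite Fs //; rewrite inE /=; apply/existsP; exists i; exact: vS.
  apply/permP => a; rewrite perm1.
  move/permP: g1 => /(_ (Some (a, ord0))); rewrite permE perm1 /=.
  by case.
have dQle := det_le dQ.
have QS : #|Q| <= #|S :\: A|.
  pose pr := fun v : myc_vertex (option T) t => if v is Some (a, _) then a else None.
  apply: (leq_trans _ (leq_imset_card pr _)); apply: subset_leq_card.
  apply/subsetP => a; rewrite inE => /andP [aN /existsP [i iS]].
  apply/imsetP; exists (Some (a, i)) => //.
  rewrite inE iS andbT; apply/imsetP => -[j _ [] E _].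
  by rewrite E in aN.
have cID := cardsID A S.
rewrite setIC cA in hb.
rewrite -cID addnC; apply: leq_add; last exact: leq_trans dQle QS.
by rewrite -subn1 leq_subLR addnC.
Qed.

Unset Implicit Arguments.
Theorem mainTheorem2 (t : nat) (ht : 1 <= t) :
  (forall (T : finType) (e : rel T),
      simple_graph e -> twin_free e -> #|T| = 1 ->
      det_num e = 0 /\ det_num (myc_rel e t) = t)
  /\
  (forall (T : finType) (h : rel T),
      simple_graph h -> (exists x y, h x y) -> twin_free (addK1 h) ->
      det_num (myc_rel (addK1 h) t) = det_num (addK1 h) + t - 1).
Proof.
split; first exact: partI.
move=> T h [hsym hirr] [x1 [y1 hx1]] tw.
have [D dD cD] := det_ex (addK1 h).
have up := upperII ht hsym hx1 tw dD.
have lo := lowerII t hsym hirr tw.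
rewrite cD in up.
have E : det_num (addK1 h) + t - 1 = det_num (addK1 h) + t.-1.
  by rewrite -addnBA // subn1.
by rewrite E; apply/eqP; rewrite eqn_leq up lo.
Qed.
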